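(* There exists a system $\dot x=f(x,u)$, $y=h(x)$, with $f:\mathbb{R}^n\times\mathbb{R}^m\to\mathbb{R}^n$ and $h:\mathbb{R}^n\to\mathbb{R}^p$ locally Lipschitz, $f(0,0)=0$, $h(0)=0$, which is ROS but not IOS.
   Context: Inputs are measurable, locally essentially bounded functions $u:[0,\infty)\to\mathbb{R}^m$; $\|u\|$ is the essential supremum of $|u(t)|$ (Euclidean norm). $x(\cdot,\xi,u)$ denotes the maximal solution of $\dot x=f(x,u)$, $x(0)=\xi$, and $y(t,\xi,u)=h(x(t,\xi,u))$. The system is forward complete if all such solutions are defined on $[0,\infty)$. Classes: $\mathcal{K}$ = continuous strictly increasing $\gamma:[0,\infty)\to[0,\infty)$ with $\gamma(0)=0$; $\mathcal{K}_\infty$ = unbounded $\mathcal{K}$ functions; $\mathcal{KL}$ = functions $\beta(s,t)$ of class $\mathcal{K}$ in $s$ and decreasing to $0$ in $t$. IOS: the system is forward complete and there exist $\beta\in\mathcal{KL}$, $\gamma\in\mathcal{K}$ with $|y(t,\xi,u)|\le\beta(|\xi|,t)+\gamma(\|u\|)$ for all $t\ge0$, $u$, $\xi$. ROS: the system is forward complete and there exists a smooth $\lambda\in\mathcal{K}_\infty$ such that the system $\dot x=f(x,d\,\lambda(|h(x)|))$, $y=h(x)$, with inputs $d$ measurable locally essentially bounded taking values in the closed unit ball of $\mathbb{R}^m$, is forward complete, and there exists $\beta\in\mathcal{KL}$ with $|y_\lambda(t,\xi,d)|\le\beta(|\xi|,t)$ for all $t\ge0$, $\xi$, $d$, where $y_\lambda(\cdot,\xi,d)$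 is the output of this closed-loop system from $\xi$ under $d$. *)

(* Defs.v *)
From HB Require Import structures.
From mathcomp Require Import all_boot all_order all_algebra.
From mathcomp Require Import all_classical all_reals all_analysis.
From mathcomp Require Import Rstruct Rstruct_topology ess_sup_inf.
From Stdlib Require Rdefinitions.
Notation R := Rdefinitions.R.
Set Implicit Arguments. Unset Strict Implicit. Unset Printing Implicit Defensive.
Import Order.TTheory GRing.Theory Num.Theory.
Import numFieldNormedType.Exports.
Local Open Scope classical_set_scope.
Local Open Scope ring_scope.

Definition vec (n : nat) := 'I_n -> R.

Definition mR := measurableTypeR R.

Definition enorm (n : nat) (x : vec n) : R := Num.sqrt (\sum_(i < n) x i ^+ 2).

Definition pnorm (n m : nat) (x : vec n) (u : vec m) : R :=
  Num.sqrt (\sum_(i < n) x i ^+ 2 + \sum_(j < m) u j ^+ 2).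

Definition I0 (t : R) : set mR := `[0, t].

Definition vsub (n : nat) (x y : vec n) : vec n := fun i => x i - y i.

Definition vzero (n : nat) : vec n := fun _ => 0.

Definition loc_lipschitz_h (n p : nat) (h : vec n -> vec p) : Prop :=
  forall z : vec n, exists eps : R, exists L : R, 0 < eps /\
    forall x y : vec n, enorm (vsub x z) < eps -> enorm (vsub y z) < eps ->
      enorm (vsub (h x) (h y)) <= L * enorm (vsub x y).

Definition loc_lipschitz_f (n m : nat) (f : vec n -> vec m -> vec n) : Prop :=
  forall (z : vec n) (w : vec m), exists eps : R, exists L : R, 0 < eps /\
    forall (x1 x2 : vec n) (u1 u2 : vec m),
      pnorm (vsub x1 z) (vsub u1 w) < eps -> pnorm (vsub x2 z) (vsub u2 w) < eps ->
      enorm (vsub (f x1 u1) (f x2 u2)) <= L * pnorm (vsub x1 x2) (vsub u1 u2).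

(* Inputs: measurable (on [0,oo)), locally essentially bounded functions.
   Values of u at negative times are irrelevant. *)
Definition input (m : nat) (u : R -> vec m) : Prop :=
  (forall j : 'I_m, measurable_fun (`[0, +oo[ : set mR) ((fun t => u t j) : mR -> mR)) /\
  (forall T : R, exists M : R,
     \forall t \ae (@lebesgue_measure R), 0 <= t <= T -> enorm (u t) <= M).

Definition input_norm (m : nat) (u : R -> vec m) : \bar R :=
  ess_sup (@lebesgue_measure R)
    (fun t : mR => if 0 <= (t : R) then (enorm (u t))%:E else 0%E).

(* x is a (Caratheodory) solution of xdot = f(x,u), x(0) = xi, on [0,oo):
   for every t >= 0, s |-> f(x s, u s) is integrable on [0,t] and
   x(t) = xi + int_0^t f(x(s),u(s)) ds (componentwise). *)
Definition solution (n m : nat) (f : vec n -> vec m -> vec n)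
  (xi : vec n) (u : R -> vec m) (x : R -> vec n) : Prop :=
  forall t : R, 0 <= t -> forall i : 'I_n,
    (@lebesgue_measure R).-integrable (I0 t) (fun s => (f (x s) (u s) i)%:E) /\
    ((x t i)%:E = (xi i)%:E +
       \int[@lebesgue_measure R]_(s in (I0 t)) (f (x s) (u s) i)%:E)%E.

(* forward completeness w.r.t. a class of admissible inputs:
   a solution exists on [0,oo). Since f is locally Lipschitz, the maximal
   solution is unique, so this says the maximal solution is defined on [0,oo). *)
Definition fwd_complete (n m : nat) (adm : (R -> vec m) -> Prop)
  (f : vec n -> vec m -> vec n) : Prop :=
  forall (xi : vec n) (u : R -> vec m), adm u -> exists x, solution f xi u x.

Definition classK (g : R -> R) : Prop :=
  g 0 = 0 /\ {within `[0, +oo[, continuous g} /\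
  (forall a b : R, 0 <= a -> a < b -> g a < g b).

Definition classKinf (g : R -> R) : Prop :=
  classK g /\ (forall M : R, exists s : R, 0 <= s /\ M < g s).

Definition classKL (b : R -> R -> R) : Prop :=
  (forall t : R, 0 <= t -> classK (fun s => b s t)) /\
  (forall s : R, 0 <= s ->
     (forall t1 t2 : R, 0 <= t1 -> t1 <= t2 -> b s t2 <= b s t1) /\
     (b s t @[t --> +oo] --> (0:R))).

Definition smooth (g : R -> R) : Prop :=
  forall (k : nat) (x : R), derivable (@derive1n R R^o k g) x 1.

Definition IOS (n m p : nat) (f : vec n -> vec m -> vec n) (h : vec n -> vec p) : Prop :=
  fwd_complete (@input m) f /\
  exists beta gamma, classKL beta /\ classK gamma /\
    forall (xi : vec n) (u : R -> vec m) (x : R -> vec n) (M : R),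
      input u -> solution f xi u x -> input_norm u = M%:E ->
      forall t : R, 0 <= t -> enorm (h (x t)) <= beta (enorm xi) t + gamma M.

Definition unit_input (m : nat) (d : R -> vec m) : Prop :=
  input d /\ (forall t : R, 0 <= t -> enorm (d t) <= 1).

Definition ROS (n m p : nat) (f : vec n -> vec m -> vec n) (h : vec n -> vec p) : Prop :=
  fwd_complete (@input m) f /\
  exists lam : R -> R, smooth lam /\ classKinf lam /\
    let fl := fun (x : vec n) (d : vec m) => f x (fun j => d j * lam (enorm (h x))) in
    fwd_complete (@unit_input m) fl /\
    exists beta, classKL beta /\
      forall (xi : vec n) (d : R -> vec m) (x : R -> vec n),
        unit_input d -> solution fl xi d x ->
        forall t : R, 0 <= t -> enorm (h (x t)) <= beta (enorm xi) t.

(* Main.v *)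
Require Import Defs.
From HB Require Import structures.
From mathcomp Require Import all_boot all_order all_algebra.
From mathcomp Require Import all_classical all_reals all_analysis.
From mathcomp Require Import Rstruct Rstruct_topology ess_sup_inf.
From mathcomp Require Import lra ring.
Import Order.TTheory GRing.Theory Num.Theory.
Import numFieldNormedType.Exports.
Local Open Scope classical_set_scope.
Local Open Scope ring_scope.

Ltac absr a := let h := fresh "ha" in case: (lerP (0:R) a) => h;
   [rewrite ?(ger0_norm h) | rewrite ?(ltr0_norm h)].
Ltac minr a b := let h := fresh "hm" in case: (lerP a b) => h;
   [rewrite ?(min_l h) | rewrite ?(min_r (ltW h))].
Ltac maxr a b := let h := fresh "hM" in case: (lerP a b) => h;
   [rewrite ?(max_r h) | rewrite ?(max_l (ltW h))].

Lemma maxL (a b : R) : `|Num.max 0 a - Num.max 0 b| <= `|a - b|.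
Proof. maxr (0:R) a; maxr (0:R) b; absr (a - b); (try (rewrite ler_norml; apply/andP; split)); lra. Qed.
Lemma minL (k a b : R) : `|Num.min k a - Num.min k b| <= `|a - b|.
Proof. minr k a; minr k b; absr (a - b); (try (rewrite ler_norml; apply/andP; split)); lra. Qed.
Lemma minL2 (a b a' b' : R) : `|Num.min a b - Num.min a' b'| <= `|a - a'| + `|b - b'|.
Proof. minr a b; minr a' b'; absr (a - a'); absr (b - b'); (try (rewrite ler_norml; apply/andP; split)); lra. Qed.
Lemma mulL (p q p' q' : R) : `|p * q - p' * q'| <= `|p| * `|q - q'| + `|q'| * `|p - p'|.
Proof.
have -> : p * q - p' * q' = p * (q - q') + q' * (p - p') by ring.
by apply: le_trans (ler_normD _ _) _; rewrite !normrM.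
Qed.
Lemma absL (a b : R) : `| `|a| - `|b| | <= `|a - b|.
Proof. exact: ler_dist_dist. Qed.

Definition i0 : 'I_3 := @Ordinal 3 0 isT.
Definition i1 : 'I_3 := @Ordinal 3 1 isT.
Definition i2 : 'I_3 := @Ordinal 3 2 isT.
Definition mk3 (a b c : R) : vec 3 := fun i => nth 0 [:: a; b; c] i.
Definition Gf (a c u : R) : R := Num.min (1/2) (Num.max 0 (u - `|c| * `|a|)).
Definition ff (x : vec 3) (u : vec 1) : vec 3 :=
  mk3 `|x i2| (Gf (x i0) (x i2) (u ord0)) 0.
Definition hh (x : vec 3) : vec 1 :=
  fun _ => `|x i2| * Num.min (Num.max 0 (x i1 - x i0)) `|x i0|.

Lemma ord3P (P : 'I_3 -> Prop) : P i0 -> P i1 -> P i2 -> forall i, P i.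
Proof.
move=> h0 h1 h2 [[|[|[|k]]] Hk] //.
- by rewrite (_ : Ordinal Hk = i0) //; apply/val_inj.
- by rewrite (_ : Ordinal Hk = i1) //; apply/val_inj.
- by rewrite (_ : Ordinal Hk = i2) //; apply/val_inj.
Qed.

Lemma sum3 (F : 'I_3 -> R) : \sum_(i < 3) F i = F i0 + F i1 + F i2.
Proof.
rewrite !big_ord_recl big_ord0 addr0 addrA.
by congr (_ + _ + _); congr F; apply/val_inj.
Qed.

Lemma enorm1 (v : vec 1) : enorm v = `|v ord0|.
Proof. by rewrite /enorm big_ord1 sqrtr_sqr. Qed.

Lemma enorm3 (v : vec 3) : enorm v = Num.sqrt (v i0 ^+ 2 + v i1 ^+ 2 + v i2 ^+ 2).
Proof. by rewrite /enorm sum3. Qed.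

Lemma pnorm31 (x : vec 3) (u : vec 1) :
  pnorm x u = Num.sqrt (x i0 ^+ 2 + x i1 ^+ 2 + x i2 ^+ 2 + u ord0 ^+ 2).
Proof. by rewrite /pnorm sum3 big_ord1. Qed.

Lemma sqrt_ge_abs (a s : R) : 0 <= s - a ^+ 2 -> `|a| <= Num.sqrt s.
Proof.
move=> h; have ha := sqr_ge0 a; rewrite -sqrtr_sqr ler_sqrt; lra.
Qed.

Lemma enorm3_ge (v : vec 3) :
  `|v i0| <= enorm v /\ `|v i1| <= enorm v /\ `|v i2| <= enorm v.
Proof.
rewrite enorm3; have h0 := sqr_ge0 (v i0); have h1 := sqr_ge0 (v i1); have h2 := sqr_ge0 (v i2).
by split; [|split]; apply: sqrt_ge_abs; lra.
Qed.

Lemma enorm3_le (v : vec 3) : enorm v <= `|v i0| + `|v i1| + `|v i2|.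
Proof.
have h0 := normr_ge0 (v i0); have h1 := normr_ge0 (v i1); have h2 := normr_ge0 (v i2).
rewrite enorm3 -[X in _ <= X]ger0_norm ?addr_ge0 // -sqrtr_sqr ler_sqrt ?sqr_ge0 //.
rewrite -(real_normK (num_real (v i0))) -(real_normK (num_real (v i1))) -(real_normK (num_real (v i2))).

have p1 := mulr_ge0 h0 h1; have p2 := mulr_ge0 h0 h2; have p3 := mulr_ge0 h1 h2; nra.
Qed.

Lemma pnorm_ge (x : vec 3) (u : vec 1) :
  `|x i0| <= pnorm x u /\ `|x i1| <= pnorm x u /\ `|x i2| <= pnorm x u /\ `|u ord0| <= pnorm x u.
Proof.
rewrite pnorm31; have h0 := sqr_ge0 (x i0); have h1 := sqr_ge0 (x i1); have h2 := sqr_ge0 (x i2).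
have h3 := sqr_ge0 (u ord0).
by split; [|split; [|split]]; apply: sqrt_ge_abs; lra.
Qed.

Lemma GfL (a c u a' c' u' : R) :
  `|Gf a c u - Gf a' c' u'| <= `|u - u'| + `|c| * `|a - a'| + `|a'| * `|c - c'|.
Proof.
rewrite /Gf; apply: le_trans (minL _ _ _) _; apply: le_trans (maxL _ _) _.
have -> : u - `|c| * `|a| - (u' - `|c'| * `|a'|) = (u - u') - (`|c| * `|a| - `|c'| * `|a'|) by ring.
apply: le_trans (ler_normB _ _) _; rewrite -addrA lerD2l.
apply: le_trans (mulL _ _ _ _) _; rewrite !normr_id.
apply: lerD; apply: ler_wpM2l => //; exact: ler_dist_dist.
Qed.

Lemma vsubE n (x y : vec n) i : vsub x y i = x i - y i. Proof. by []. Qed.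

Lemma ff_lip : loc_lipschitz_f ff.
Proof.
move=> z w; set K := `|z i0| + `|z i2| + 1.
have K0 : 0 <= K by rewrite /K; have := normr_ge0 (z i0); have := normr_ge0 (z i2); lra.
exists 1, (3 + 2 * K); split => // x1 x2 u1 u2 H1 H2.
have [a1 [_ [c1 _]]] := pnorm_ge (vsub x1 z) (vsub u1 w).
have [a2 [_ [c2 _]]] := pnorm_ge (vsub x2 z) (vsub u2 w).
have [dA [_ [dC dU]]] := pnorm_ge (vsub x1 x2) (vsub u1 u2).
rewrite !vsubE in a1 c1 a2 c2 dA dC dU.
set P := pnorm (vsub x1 x2) (vsub u1 u2) in dA dC dU *.
have bnd (p q : R) : `|p - q| <= pnorm (vsub x1 z) (vsub u1 w) \/ `|p - q| <= pnorm (vsub x2 z) (vsub u2 w) -> `|p| <= `|q| + 1.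
  move=> hp; have : `|p - q| <= 1 by case: hp => hp; lra.
  move=> h; have := ler_normB p q.
  have : `|p| <= `|p - q| + `|q| by have := ler_normD (p - q) q; rewrite subrK.
  lra.
have hA1 : `|x1 i0| <= K by have := bnd _ _ (or_introl a1); have := normr_ge0 (z i2); rewrite /K; lra.
have hA2 : `|x2 i0| <= K by have := bnd _ _ (or_intror a2); have := normr_ge0 (z i2); rewrite /K; lra.
have hC1 : `|x1 i2| <= K by have := bnd _ _ (or_introl c1); have := normr_ge0 (z i0); rewrite /K; lra.
have hC2 : `|x2 i2| <= K by have := bnd _ _ (or_intror c2); have := normr_ge0 (z i0); rewrite /K; lra.
apply: le_trans (enorm3_le _) _; rewrite !vsubE /ff /mk3 /=.
have g := GfL (x1 i0) (x1 i2) (u1 ord0) (x2 i0) (x2 i2) (u2 ord0).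
have e1 : `|x1 i2| * `|x1 i0 - x2 i0| <= K * P by apply: ler_pM.
have e2 : `|x2 i0| * `|x1 i2 - x2 i2| <= K * P by apply: ler_pM.
have e3 := ler_dist_dist (x1 i2) (x2 i2).
have P0 : 0 <= P by apply: le_trans (normr_ge0 _) dA.
rewrite subrr normr0.
have e4 : 2 * K * P = K * P + K * P by ring.
have e5 : (3 + 2 * K) * P = 3 * P + 2 * K * P by ring.
rewrite e5 e4. lra.
Qed.

Lemma mbound (d a : R) : 0 <= Num.min (Num.max 0 d) `|a| <= `|a|.
Proof.
have := normr_ge0 a => h; apply/andP; split.
- by rewrite le_min le_max lexx h.
- by rewrite ge_min lexx orbT.
Qed.

Lemma hh_lip : loc_lipschitz_h hh.
Proof.
move=> z; set K := `|z i0| + `|z i2| + 1.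
have K0 : 0 <= K by rewrite /K; have := normr_ge0 (z i0); have := normr_ge0 (z i2); lra.
exists 1, (4 * K); split => // x y H1 H2.
have [a1 [_ c1]] := enorm3_ge (vsub x z).
have [a2 [_ c2]] := enorm3_ge (vsub y z).
have [dA [dB dC]] := enorm3_ge (vsub x y).
rewrite !vsubE in a1 c1 a2 c2 dA dB dC.
set P := enorm (vsub x y) in dA dB dC *.
have bnd (p q : R) : `|p - q| < 1 -> `|p| <= `|q| + 1.
  move=> h.
  have : `|p| <= `|p - q| + `|q| by have := ler_normD (p - q) q; rewrite subrK.
  lra.
have hA2 : `|y i0| <= K.
  have := bnd _ _ (le_lt_trans a2 H2); have := normr_ge0 (z i2); rewrite /K; lra.
have hC1 : `|x i2| <= K.
  have := bnd _ _ (le_lt_trans c1 H1); have := normr_ge0 (z i0); rewrite /K; lra.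
rewrite enorm1 vsubE /hh.
apply: le_trans (mulL _ _ _ _) _; rewrite normr_id.
set m1 := Num.min _ _; set m2 := Num.min _ _.
have hm2 : `|m2| <= K.
  have /andP[h0 h1] := mbound (y i1 - y i0) (y i0).
  by rewrite ger0_norm //; apply: le_trans h1 hA2.
have dm : `|m1 - m2| <= 2 * P + P.
  apply: le_trans (minL2 _ _ _ _) _.
  have := maxL (x i1 - x i0) (y i1 - y i0).
  have -> : x i1 - x i0 - (y i1 - y i0) = (x i1 - y i1) - (x i0 - y i0) by ring.
  have := ler_normB (x i1 - y i1) (x i0 - y i0).
  have := ler_dist_dist (x i0) (y i0).
  lra.
have P0 : 0 <= P by apply: le_trans (normr_ge0 _) dA.
have e1 : `|x i2| * `|m1 - m2| <= K * (2 * P + P) by apply: ler_pM.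
have e2 : `|m2| * `| `|x i2| - `|y i2| | <= K * P.
  by apply: ler_pM => //; apply: le_trans (ler_dist_dist _ _) dC.
have e3 : 4 * K * P = K * (2 * P + P) + K * P by ring.
rewrite e3; lra.
Qed.

Lemma smooth_id : smooth (fun s : R => s).
Proof.
have E : forall k, @derive1n R R^o k.+2 (fun s : R => s) = cst 0.
  elim=> [|k IH].
  - rewrite derive1nS derive1n1; apply/funext => x.
    rewrite (_ : (fun s : R => (s : R^o))^`()%classic = cst 1) ?derive1_cst //.
    by apply/funext => y; rewrite derive1_id.
  - by rewrite derive1nS IH; apply/funext => x; rewrite derive1_cst.
move=> [|[|k]] x.
- rewrite derive1n0; exact: derivable_id.
- rewrite derive1n1 (_ : (fun s : R => (s : R^o))^`()%classic = cst 1); first exact: derivable_cst.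
  by apply/funext => y; rewrite derive1_id.
- rewrite E; exact: derivable_cst.
Qed.

Lemma classKinf_id : classKinf (fun s : R => s).
Proof.
split; [split; [by []|split]|].
- apply: continuous_subspaceT => x; exact: cvg_id.
- by move=> a b _.
- move=> M; exists (`|M| + 1); split; first by have := normr_ge0 M; lra.
  by have := ler_norm M; lra.
Qed.

Definition beta (s t : R) : R := 3 * s ^+ 2 / (1 + t).

Lemma beta_KL : classKL beta.
Proof.
split.
- move=> t t0; split; [by rewrite /beta expr0n /= mulr0 mul0r|split].
  + apply: continuous_subspaceT => x.
    rewrite /beta.
    apply: (@continuousM R R (fun s => 3 * s ^+ 2) (fun _ => (1 + t)^-1)).
    * apply: (@continuousM R R (fun _ => 3) (fun s => s ^+ 2)); first exact: cvg_cst.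
      exact: exprn_continuous.
    * exact: cvg_cst.
  + move=> a b a0 ab; rewrite /beta ltr_pM2r ?invr_gt0; last lra.
    rewrite ltr_pM2l //; nra.
- move=> s s0; split.
  + move=> t1 t2 t10 t12; rewrite /beta ler_wpM2l ?mulr_ge0 ?sqr_ge0 //.
    rewrite lef_pV2 ?posrE; lra.
  + apply/(@cvgr0Pnorm_lt R R^o _ _ _ (fun t => beta s t)) => e e0.
    exists (3 * s ^+ 2 / e); split; first by rewrite num_real.
    move=> t Ht; rewrite /beta.
    have s2 := sqr_ge0 s.
    have H0 : 0 <= 3 * s ^+ 2 / e by apply: divr_ge0; [apply: mulr_ge0 | apply: ltW].
    rewrite ger0_norm ?divr_ge0 ?mulr_ge0 //; last lra.
    rewrite ltr_pdivrMr; last lra.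
    have : 3 * s ^+ 2 < e * t by rewrite -ltr_pdivrMl // mulrC.
    nra.
Qed.

Lemma I0_mble t : measurable (I0 t).
Proof. exact: measurable_itv. Qed.

Lemma I0_mem t s : I0 t s -> 0 <= s <= t.
Proof. by rewrite /I0 /= in_itv /=. Qed.

Lemma I0_sub t : I0 t `<=` `[0, +oo[.
Proof. by move=> s /I0_mem /andP[h _]; rewrite /= in_itv /= h. Qed.

Lemma I0_meas t : 0 <= t -> (@lebesgue_measure R) (I0 t) = t%:E.
Proof.
move=> t0; rewrite /I0 lebesgue_measure_itv /= lte_fin.
case: (ltrP 0 t) => h; first by rewrite sube0. 
by have -> : t = 0 by apply/le_anti/andP; split.
Qed.

Lemma I0_fin t : 0 <= t -> ((@lebesgue_measure R) (I0 t) < +oo)%E.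
Proof. by move=> t0; rewrite I0_meas // ltry. Qed.

Lemma int_cst_on t c (g : R -> R) : 0 <= t -> (forall s, 0 <= s <= t -> g s = c) ->
  (@lebesgue_measure R).-integrable (I0 t) (fun s => (g s)%:E) /\
  (\int[@lebesgue_measure R]_(s in I0 t) (g s)%:E = (c * t)%:E)%E.
Proof.
move=> t0 hg.
have E : {in I0 t, (fun s => (c%:E)) =1 (fun s => (g s)%:E)}.
  by move=> s; rewrite inE => /I0_mem /hg ->.
split.
- apply: (eq_integrable (I0_mble t) (fun s => (cst c s)%:E)) => //.
  apply: measurable_bounded_integrable => //; first exact: I0_mble.
  + exact: I0_fin.
  + by exists (`|c|); split; [rewrite num_real | move=> x hx y _; apply: ltW; apply: le_lt_trans hx].
- rewrite -(eq_integral _ _ E) integral_cst; last exact: I0_mble.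
  transitivity (c%:E * t%:E)%E; last by []. by congr (_ * _)%E; exact: I0_meas.
Qed.

Definition x1f (xi : vec 3) (t : R) : R := xi i0 + `|xi i2| * t.
Definition Gint (xi : vec 3) (u : R -> vec 1) (t : R) : \bar R :=
  (\int[@lebesgue_measure R]_(s in I0 t) (Gf (x1f xi s) (xi i2) (u s ord0))%:E)%E.
Definition solx (xi : vec 3) (u : R -> vec 1) (t : R) : vec 3 :=
  mk3 (x1f xi t) (xi i1 + fine (Gint xi u t)) (xi i2).

Lemma Gf_bnd a c u : 0 <= Gf a c u <= 1/2.
Proof.
rewrite /Gf; apply/andP; split.
- rewrite le_min le_max lexx /=; apply/andP; split => //; lra.
- by rewrite ge_min lexx.
Qed.

Lemma G_mble (xi : vec 3) (u : R -> vec 1) t : input u ->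
  measurable_fun (I0 t) ((fun s => Gf (x1f xi s) (xi i2) (u s ord0)) : mR -> mR).
Proof.
move=> [mu _].
have mu0 : measurable_fun (I0 t) ((fun s => u s ord0) : mR -> mR).
  exact: (measurable_funS (measurable_itv _) (@I0_sub t) (mu ord0)).
rewrite /Gf.
apply: measurable_realfun.measurable_minr; first exact: measurable_cst.
apply: measurable_realfun.measurable_maxr; first exact: measurable_cst.
apply: measurable_realfun.measurable_funB => //.
apply: measurable_realfun.measurable_funM; first exact: measurable_cst.
have mx : measurable_fun (I0 t) ((x1f xi) : mR -> mR).
  rewrite /x1f.
  apply: measurable_realfun.measurable_funD; first exact: measurable_cst.
  apply: measurable_realfun.measurable_funM; first exact: measurable_cst.
  exact: measurable_id.
have mN : measurable_fun (I0 t) ((fun s => `|x1f xi s|) : mR -> mR) by apply: (measurableT_comp _ mx).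
exact: mN.
Qed.

Lemma G_int (xi : vec 3) (u : R -> vec 1) t : input u -> 0 <= t ->
  (@lebesgue_measure R).-integrable (I0 t) (fun s => (Gf (x1f xi s) (xi i2) (u s ord0))%:E).
Proof.
move=> iu t0.
apply: measurable_bounded_integrable; first exact: I0_mble.
- exact: I0_fin.
- exact: G_mble.
- exists 1; split; first by rewrite num_real.
  move=> y y1 s _; have /andP[h1 h2] := Gf_bnd (x1f xi s) (xi i2) (u s ord0).
  rewrite /= ger0_norm //; lra.
Qed.

Lemma solx_sol (xi : vec 3) (u : R -> vec 1) : input u -> solution ff xi u (solx xi u).
Proof.
move=> iu t t0; apply: ord3P.
- have [h1 h2] := @int_cst_on t `|xi i2| (fun s => ff (solx xi u s) (u s) i0) t0 (fun s _ => erefl).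
  split => //; rewrite h2 /solx /mk3 /= /x1f; by rewrite EFinD mulrC.
- split; first exact: G_int.
  rewrite /solx /mk3 /= EFinD fineK //.
  apply: integrable_fin_num => //; first exact: I0_mble. exact: G_int.
- have [h1 h2] := @int_cst_on t 0 (fun s => ff (solx xi u s) (u s) i2) t0 (fun s _ => erefl).
  split => //; rewrite h2 mul0r adde0 //.
Qed.

Definition fl (x : vec 3) (d : vec 1) : vec 3 :=
  ff x (fun j => d j * (fun s : R => s) (enorm (hh x))).

Lemma deadzone (x : vec 3) (e : R) : `|e| <= 1 -> Gf (x i0) (x i2) (e * enorm (hh x)) = 0.
Proof.
move=> he; rewrite enorm1 /hh.
have /andP[m0 m1] := mbound (x i1 - x i0) (x i0).
set m := Num.min _ _ in m0 m1 *.
have c0 := normr_ge0 (x i2).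
rewrite ger0_norm ?mulr_ge0 //.
have h1 : e * (`|x i2| * m) <= `|x i2| * `|x i0|.
  have : e * (`|x i2| * m) <= `|e| * (`|x i2| * m) by apply: ler_wpM2r; [apply: mulr_ge0 | apply: ler_norm].
  have : `|e| * (`|x i2| * m) <= 1 * (`|x i2| * m) by apply: ler_wpM2r => //; apply: mulr_ge0.
  have : `|x i2| * m <= `|x i2| * `|x i0| by apply: ler_wpM2l.
  lra.
rewrite /Gf max_l; last lra.
by rewrite min_r //; lra.
Qed.

Definition clx (xi : vec 3) (t : R) : vec 3 := mk3 (x1f xi t) (xi i1) (xi i2).

Lemma unit_abs (d : R -> vec 1) s : unit_input d -> 0 <= s -> `|d s ord0| <= 1.
Proof. by move=> [_ hd] s0; rewrite -enorm1; apply: hd. Qed.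

Lemma clx_sol (d : R -> vec 1) (xi : vec 3) : unit_input d -> solution fl xi d (clx xi).
Proof.
move=> ud t t0; apply: ord3P.
- have [h1 h2] := @int_cst_on t `|xi i2| (fun s => fl (clx xi s) (d s) i0) t0 (fun s _ => erefl).
  split => //; rewrite h2 /clx /mk3 /= /x1f; by rewrite EFinD mulrC.
- have [h1 h2] := @int_cst_on t 0 (fun s => fl (clx xi s) (d s) i1) t0
     (fun s hs => @deadzone (clx xi s) (d s ord0) (@unit_abs d s ud (proj1 (andP hs)))).
  split => //; rewrite h2 mul0r adde0 //.
- have [h1 h2] := @int_cst_on t 0 (fun s => fl (clx xi s) (d s) i2) t0 (fun s _ => erefl).
  split => //; rewrite h2 mul0r adde0 //.
Qed.

Lemma cl_comp (d : R -> vec 1) (xi : vec 3) x : unit_input d -> solution fl xi d x ->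
  forall t, 0 <= t -> x t i0 = x1f xi t /\ x t i1 = xi i1 /\ x t i2 = xi i2.
Proof.
move=> ud sx.
have c2 : forall t, 0 <= t -> x t i2 = xi i2.
  move=> t t0; have [_ e] := sx t t0 i2.
  have [_ h2] := @int_cst_on t 0 (fun s => fl (x s) (d s) i2) t0 (fun s _ => erefl).
  by move: e; rewrite h2 mul0r adde0 => hE; apply: EFin_inj; exact: hE.
move=> t t0; split; last split.
- have [_ e] := sx t t0 i0.
  have [_ h2] := @int_cst_on t `|xi i2| (fun s => fl (x s) (d s) i0) t0
     (fun s hs => congr1 (@Num.norm _ R) (c2 s (proj1 (andP hs)))).
  by move: e; rewrite h2 -EFinD => hE; apply: EFin_inj; exact: hE.
- have [_ e] := sx t t0 i1.
  have [_ h2] := @int_cst_on t 0 (fun s => fl (x s) (d s) i1) t0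
     (fun s hs => @deadzone (x s) (d s ord0) (@unit_abs d s ud (proj1 (andP hs)))).
  by move: e; rewrite h2 mul0r adde0 => hE; apply: EFin_inj; exact: hE.
- exact: c2.
Qed.

Lemma ros_bnd (xi x : vec 3) t : 0 <= t -> x i0 = x1f xi t -> x i1 = xi i1 -> x i2 = xi i2 ->
  enorm (hh x) <= beta (enorm xi) t.
Proof.
move=> t0 e0 e1 e2; rewrite enorm1 /hh e0 e1 e2 /beta /x1f.
have [s0 [s1 s2]] := enorm3_ge xi.
set s := enorm xi in s0 s1 s2 *.
set a := `|xi i2| in s2 *.
have a0 : 0 <= a by apply: normr_ge0.
have /andP[m0 m1] := mbound (xi i1 - (xi i0 + a * t)) (xi i0 + a * t).
set m := Num.min _ _ in m0 m1 *.
rewrite ger0_norm ?mulr_ge0 // ler_pdivlMr; last lra.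
have b0 : xi i1 - xi i0 <= 2 * s.
  have := ler_norm (xi i1); have := ler_norm (- xi i0); rewrite normrN; lra.
have mle : m <= Num.max 0 (xi i1 - (xi i0 + a * t)) by rewrite /m ge_min lexx.
have ss := sqr_ge0 s.
case: (lerP (xi i1 - (xi i0 + a * t)) 0) => hb.
- rewrite max_l // in mle.
  have -> : m = 0 by apply/le_anti/andP; split.
  rewrite mulr0 mul0r; apply: mulr_ge0 => //.
- rewrite max_r in mle; last lra.
  have at0 : 0 <= a * t by apply: mulr_ge0.
  have mm : m <= 2 * s by lra.
  have p1 : a * m <= 2 * s ^+ 2.
    have := ler_pM a0 m0 s2 mm; rewrite expr2; lra.
  have p2 : (a * t) * m <= (a * t) * (2 * s - a * t) by apply: ler_wpM2l => //; lra.
  have p3 : (a * t) * (2 * s - a * t) <= s ^+ 2.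
    have := sqr_ge0 (a * t - s); rewrite !expr2; lra.
  have -> : a * m * (1 + t) = a * m + (a * t) * m by ring.
  lra.
Qed.

Definition u1 : R -> vec 1 := fun _ _ => 1.

Lemma input_u1 : input u1.
Proof.
split.
- move=> j; exact: measurable_cst.
- move=> T; exists 1; apply: aeW => t _; by rewrite enorm1 /u1 normr1.
Qed.

Lemma muT_gt0 : (0 < (@lebesgue_measure R) [set: mR])%E.
Proof.
apply: (@lt_le_trans _ _ ((@lebesgue_measure R) (I0 1))).
  by rewrite I0_meas // lte_fin.
apply: le_measure => //; rewrite inE //; exact: I0_mble.
Qed.

Lemma input_norm_u1 : exists M, input_norm u1 = M%:E /\ 0 <= M <= 1.
Proof.
have hle : (input_norm u1 <= 1%:E)%E.
  apply/ess_supP; apply: aeW => t /=; case: ifP => _; rewrite ?enorm1 /u1 ?normr1 ?lee_fin //.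
have hge : (0%:E <= input_norm u1)%E.
  apply: ess_sup_gee; first exact: muT_gt0.
  apply: aeW => t /=; case: ifP => _ //; rewrite lee_fin /enorm; exact: sqrtr_ge0.
have fin : input_norm u1 \is a fin_num by rewrite ge0_fin_numE // (le_lt_trans hle) ?ltry.
exists (fine (input_norm u1)); split; first by rewrite fineK.
by rewrite -lee_fin -(lee_fin _ 1) fineK // hge hle.
Qed.

Lemma classK_mono (g : R -> R) a b : classK g -> 0 <= a -> a <= b -> g a <= g b.
Proof.
move=> [_ [_ hg]] a0 ab; case: (ltgtP a b) ab => // [hab _|-> _ //].
exact/ltW/hg.
Qed.

Lemma not_IOS : ~ IOS ff hh.
Proof.
move=> [_ [bt [gm [[hKL1 hKL2] [hK hb]]]]].
have [M [hM /andP[M0 M1]]] := input_norm_u1.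
have bt0 : 0 <= bt 1 0.
  have hk := hKL1 0 (lexx 0); have := @classK_mono _ 0 1 hk (lexx 0) ler01.
  by case: hk => /= z _; rewrite z.
have gm0 : 0 <= gm 1.
  have := @classK_mono _ 0 1 hK (lexx 0) ler01.
  by case: hK => /= z _; rewrite z.
set K := bt 1 0 + gm 1 + 1.
have K1 : 1 <= K by rewrite /K; lra.
have K0 : 0 < K by lra.
set e := (8 * K)^-1.
have e0 : 0 < e by rewrite /e invr_gt0; lra.
have K8 : 8 * K != 0 by rewrite gt_eqF //; lra.
have eK : e * (8 * K) = 1 by rewrite /e mulVf.
have e1 : e <= 1.
  have : e * 1 <= e * (8 * K) by apply: ler_wpM2l; lra.
  lra.
set T := 32 * K ^+ 2.
set ts := 64 * K ^+ 3.
have T0 : 0 <= T by rewrite /T; apply: mulr_ge0 => //; apply: sqr_ge0.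
have Tts : T <= ts.
  rewrite /T /ts; have -> : 64 * K ^+ 3 = 32 * K ^+ 2 * (2 * K) by rewrite exprS; ring.
  rewrite -{1}(mulr1 (32 * K ^+ 2)); apply: ler_wpM2l => //; lra.
have ts0 : 0 <= ts by lra.
set xi := mk3 0 0 e.
have exi : enorm xi = e by rewrite enorm3 /xi /mk3 /= expr0n /= !add0r sqrtr_sqr gtr0_norm.
have sx := @solx_sol xi u1 input_u1.
have H := hb xi u1 (solx xi u1) M input_u1 sx hM ts ts0.
have eeT : e * (e * T) = 1 / 2.
  have -> : e * (e * T) = (e * (8 * K)) ^+ 2 / 2 by rewrite /T; field.
  by rewrite eK expr1n.
have hG : forall s, 0 <= s <= T -> Gf (x1f xi s) (xi i2) (u1 s ord0) = 1 / 2.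
  move=> s /andP[s0 sT]; rewrite /Gf /x1f /xi /mk3 /u1 /= add0r gtr0_norm //.
  rewrite ger0_norm ?mulr_ge0 //; last exact: ltW.
  have : e * (e * s) <= e * (e * T).
    apply: ler_wpM2l; first exact: ltW.
    apply: ler_wpM2l => //; exact: ltW.
  move=> hs; rewrite max_r; last lra.
  rewrite min_l //; lra.
have Gint_lb : ((T / 2)%:E <= Gint xi u1 ts)%E.
  rewrite /Gint.
  apply: (@le_trans _ _ (\int[@lebesgue_measure R]_(s in I0 T) (Gf (x1f xi s) (xi i2) (u1 s ord0))%:E)%E).
    have [_ h2] := @int_cst_on T (1/2) _ T0 hG.
    by rewrite h2 mulrC mul1r.
  apply: ge0_subset_integral; [exact: I0_mble | exact: I0_mble | | | ].
  - apply/measurable_realfun.measurable_EFinP; apply: G_mble; exact: input_u1.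
  - by move=> s _; rewrite lee_fin; have /andP[] := Gf_bnd (x1f xi s) (xi i2) (u1 s ord0).
  - move=> s /I0_mem /andP[s0 sT]; rewrite /I0 /= in_itv /= s0 /=; lra.
have fin : Gint xi u1 ts \is a fin_num.
  apply: integrable_fin_num => //; first exact: I0_mble.
  exact: (@G_int xi u1 ts input_u1 ts0).
have x1lb : T / 2 <= fine (Gint xi u1 ts) by rewrite -lee_fin fineK.
have ets : e * ts = 8 * K ^+ 2.
  have -> : e * ts = 8 * K ^+ 2 * (e * (8 * K)) by rewrite /ts; ring.
  by rewrite eK mulr1.
have hT : T = 32 * K ^+ 2 by [].
have K2 : 0 <= K ^+ 2 by apply: sqr_ge0.
have sx0 : solx xi u1 ts i0 = e * ts by rewrite /solx /x1f /= add0r gtr0_norm.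
have sx1 : solx xi u1 ts i1 = fine (Gint xi u1 ts) by rewrite /solx /= add0r.
have sx2 : solx xi u1 ts i2 = e by [].
move: H; rewrite enorm1 /hh sx0 sx1 sx2 (gtr0_norm e0) ets.
rewrite max_r; last lra.
rewrite (@ger0_norm _ (8 * K ^+ 2)); last lra.
rewrite min_r; last lra.
rewrite ger0_norm; last by apply: mulr_ge0; lra.
have -> : e * (8 * K ^+ 2) = K * (e * (8 * K)) by ring.
rewrite eK mulr1 exi => H.
have b1 : bt e ts <= bt e 0 by apply: (proj1 (hKL2 e (ltW e0))) => //.
have b2 : bt e 0 <= bt 1 0 by apply: (@classK_mono (fun s => bt s 0)) => //; [exact: hKL1 | exact: ltW].
have b3 : gm M <= gm 1 by apply: classK_mono.
rewrite /K in H; clear -H b1 b2 b3; lra.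
Qed.

Lemma ff0 : ff (@vzero 3) (@vzero 1) = @vzero 3.
Proof.
apply/funext; apply: ord3P; rewrite /ff /mk3 /vzero /= ?normr0 //.
rewrite /Gf normr0 mulr0 subrr maxxx min_r //; lra.
Qed.

Lemma hh0 : hh (@vzero 3) = @vzero 1.
Proof. by apply/funext => i; rewrite /hh /vzero normr0 mul0r. Qed.

Theorem lemma2p5 :
  exists (n m p : nat) (f : vec n -> vec m -> vec n) (h : vec n -> vec p),
    loc_lipschitz_f f /\ loc_lipschitz_h h /\
    f (@vzero n) (@vzero m) = @vzero n /\ h (@vzero n) = @vzero p /\
    ROS f h /\ ~ IOS f h.
Proof.
exists 3%N, 1%N, 1%N, ff, hh.
split; first exact: ff_lip.
split; first exact: hh_lip.
split; first exact: ff0.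
split; first exact: hh0.
split; last exact: not_IOS.
split.
- move=> xi u iu; exists (solx xi u); exact: solx_sol.
- exists (fun s => s); split; first exact: smooth_id.
  split; first exact: classKinf_id.
  move=> fl0; split.
  + move=> xi d ud; exists (clx xi); exact: clx_sol.
  + exists beta; split; first exact: beta_KL.
    move=> xi d x ud sx t t0.
    have [e0 [e1 e2]] := @cl_comp d xi x ud sx t t0.
    exact: ros_bnd.
Qed.
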